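(* Fix $R_t>0$, $R_s=2^{R_t}$, all parameters $p_B,p_E,m_B,m_E,K_{B,r},K_{E,r}$ ($r=1,2$) and $\bar\gamma_E$, and regard the secrecy outage probability $P_o=\int_0^\infty F_B(R_s\gamma+R_s-1)f_E(\gamma)\,d\gamma$ as a function of $\bar\gamma_B$. Then the secrecy diversity order is $$G_d:=-\lim_{\bar\gamma_B\to\infty}\frac{\log P_o}{\log\bar\gamma_B}=1,$$ independently of $m_\ell$, $K_{\ell,r}$ and $p_\ell$.
   Context: Setting. For each $\ell\in\{B,E\}$ (legitimate receiver $B$, eavesdropper $E$) fix parameters $p_\ell\in[0,1]$, $m_\ell>0$, $K_{\ell,1},K_{\ell,2}>0$ and $\bar\gamma_\ell>0$; put $\bar K_\ell=p_\ell K_{\ell,1}+(1-p_\ell)K_{\ell,2}$, $Q_{\ell,1}=p_\ell$, $Q_{\ell,2}=1-p_\ell$. For $r\in\{1,2\}$ and $\gamma\ge0$ let $f_{RS,\ell,r}(\gamma)=\frac{1+\bar K_\ell}{\bar\gamma_\ell}\big(\frac{m_\ell}{m_\ell+K_{\ell,r}}\big)^{m_\ell}\exp\big(-\frac{(1+\bar K_\ell)\gamma}{\bar\gamma_\ell}\big)\,{}_1F_1\big(m_\ell;1;\frac{K_{\ell,r}(1+\bar K_\ell)\gamma}{\bar\gamma_\ell(m_\ell+K_{\ell,r})}\big)$ and $F_{RS,\ell,r}(\gamma)=\int_0^\gamma f_{RS,\ell,r}(t)\,dt$, where ${}_1F_1$ is Kummer's confluent hypergeometric function. The Alternate Rician Shadowed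 (ARS) SNR $\gamma_\ell$ has density $f_\ell=Q_{\ell,1}f_{RS,\ell,1}+Q_{\ell,2}f_{RS,\ell,2}$ and CDF $F_\ell=Q_{\ell,1}F_{RS,\ell,1}+Q_{\ell,2}F_{RS,\ell,2}$ on $[0,\infty)$; $\gamma_B,\gamma_E$ are independent. *)

(* Defs.v *)
From Stdlib Require Import Reals.
From Coquelicot Require Import Coquelicot.
Open Scope R_scope.

Fixpoint pochhammer (a : R) (n : nat) : R :=
  match n with
  | O => 1
  | S k => pochhammer a k * (a + INR k)
  end.

Definition hyp1F1 (a b z : R) : R :=
  Series (fun n => pochhammer a n / pochhammer b n * z ^ n / INR (Factorial.fact n)).

Definition Kbar (p K1 K2 : R) : R := p * K1 + (1 - p) * K2.

Definition f_RS (p m K1 K2 gbar Kr g : R) : R :=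
  (1 + Kbar p K1 K2) / gbar * Rpower (m / (m + Kr)) m
  * exp (- ((1 + Kbar p K1 K2) * g / gbar))
  * hyp1F1 m 1 (Kr * (1 + Kbar p K1 K2) * g / (gbar * (m + Kr))).

Definition F_RS (p m K1 K2 gbar Kr g : R) : R :=
  RInt (f_RS p m K1 K2 gbar Kr) 0 g.

(* ARS density and CDF: Q1 = p, Q2 = 1 - p. *)
Definition f_ARS (p m K1 K2 gbar g : R) : R :=
  p * f_RS p m K1 K2 gbar K1 g + (1 - p) * f_RS p m K1 K2 gbar K2 g.

Definition F_ARS (p m K1 K2 gbar g : R) : R :=
  p * F_RS p m K1 K2 gbar K1 g + (1 - p) * F_RS p m K1 K2 gbar K2 g.

Definition Rs (Rt : R) : R := Rpower 2 Rt.

Definition Pout (Rt pB mB KB1 KB2 gB pE mE KE1 KE2 gE : R) : R :=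
  RInt_gen
    (fun g => F_ARS pB mB KB1 KB2 gB (Rs Rt * g + Rs Rt - 1) * f_ARS pE mE KE1 KE2 gE g)
    (at_point 0) (Rbar_locally p_infty).

(* Main.v *)
Require Import Defs.
From Stdlib Require Import Reals Lra Lia.
From Coquelicot Require Import Coquelicot.
Open Scope R_scope.

Lemma poch1 n : pochhammer 1 n = INR (Factorial.fact n).
Proof.
  induction n; simpl pochhammer. simpl; lra.
  rewrite IHn. change (Factorial.fact (S n)) with (S n * Factorial.fact n)%nat.
  rewrite mult_INR, S_INR. ring.
Qed.

Lemma poch_pos m n : 0 < m -> 0 < pochhammer m n.
Proof.
  intros Hm; induction n; simpl. lra.
  apply Rmult_lt_0_compat; auto. pose proof (pos_INR n); lra.
Qed.

Definition hc (m : R) (n : nat) : R :=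
  pochhammer m n / (INR (Factorial.fact n) * INR (Factorial.fact n)).

Lemma hyp_eq m z : hyp1F1 m 1 z = PSeries (hc m) z.
Proof.
  unfold hyp1F1, PSeries. apply Series_ext. intros n.
  rewrite poch1. unfold hc. pose proof (INR_fact_neq_0 n). field; auto.
Qed.

Lemma hc_pos m n : 0 < m -> 0 < hc m n.
Proof.
  intros Hm. unfold hc. apply Rdiv_lt_0_compat. apply poch_pos; auto.
  pose proof (INR_fact_lt_0 n). nra.
Qed.

Lemma hc_radius m : 0 < m -> CV_radius (hc m) = p_infty.
Proof.
  intros Hm. apply CV_radius_infinite_DAlembert.
  intros n; pose proof (hc_pos m n Hm); lra.
  apply is_lim_seq_le_le with (u := fun _ => 0) (w := fun n => (m+1) * / INR (S n)).
  - intros n. split. apply Rabs_pos.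
    unfold hc. simpl pochhammer.
    change (Factorial.fact (S n)) with (S n * Factorial.fact n)%nat.
    rewrite mult_INR. pose proof (INR_fact_lt_0 n). pose proof (poch_pos m n Hm).
    pose proof (pos_INR n). rewrite S_INR.
    replace (pochhammer m n * (m + INR n) / ((INR n + 1) * INR (Factorial.fact n) * ((INR n + 1) * INR (Factorial.fact n))) /
     (pochhammer m n / (INR (Factorial.fact n) * INR (Factorial.fact n))))
     with ((m + INR n) / ((INR n + 1) * (INR n + 1))) by (field; lra).
    rewrite Rabs_pos_eq.
    2: { apply Rdiv_le_0_compat; nra. }
    apply (Rmult_le_reg_r ((INR n + 1) * (INR n + 1))). nra.
    field_simplify; try lra. nra.
  - apply is_lim_seq_const.
  - replace (Finite 0) with (Rbar_mult (m+1) (Rbar_inv p_infty)).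
    2: { simpl. f_equal. ring. }
    apply is_lim_seq_scal_l.
    apply is_lim_seq_inv.
    apply is_lim_seq_ext with (fun n => INR n + 1). intros n; rewrite S_INR; auto.
    eapply is_lim_seq_plus. apply is_lim_seq_INR. apply is_lim_seq_const. simpl. reflexivity.
    discriminate.
Qed.

Lemma hyp_ex m z : 0 < m -> ex_series (fun k => hc m k * z ^ k).
Proof.
  intros Hm. assert (H := CV_radius_inside (hc m) z).
  rewrite hc_radius in H; auto. specialize (H I).
  destruct H as [l Hl]. exists l. apply is_pseries_R; auto.
Qed.

Lemma hyp_ge1 m z : 0 < m -> 0 <= z -> 1 <= hyp1F1 m 1 z.
Proof.
  intros Hm Hz. rewrite hyp_eq. unfold PSeries.
  rewrite Series_incr_1 by (apply hyp_ex; auto).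
  assert (hc m 0 = 1). { unfold hc; simpl; field. }
  rewrite H. simpl pow. 
  assert (0 <= Series (fun k => hc m (S k) * z ^ S k)).
  { replace 0 with (Series (fun _ : nat => 0)).
    apply Series_le. intros n; split. lra.
    apply Rmult_le_pos. left; apply hc_pos; auto. apply pow_le; auto.
    apply (ex_series_incr_1 (fun k => hc m k * z ^ k)). apply hyp_ex; auto.
    rewrite (Series_ext (fun _ : nat => 0) (fun n : nat => 0 * 1)) by (intros; ring).
    rewrite Series_scal_l. ring. }
  simpl pow in H0. lra.
Qed.

Lemma coef_bound m beta : 0 < m -> 1 < beta ->
  exists C, 0 < C /\ forall n, pochhammer m n / INR (Factorial.fact n) <= C * beta ^ n.
Proof.
  intros Hm Hb.
  set (u := fun n => pochhammer m n / (INR (Factorial.fact n) * beta ^ n)).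
  assert (upos : forall n, 0 < u n).
  { intros n. unfold u. apply Rdiv_lt_0_compat. apply poch_pos; auto.
    apply Rmult_lt_0_compat. apply INR_fact_lt_0. apply pow_lt; lra. }
  assert (Hx : 0 <= m / (beta - 1)) by (apply Rdiv_le_0_compat; lra).
  destruct (nfloor_ex _ Hx) as [N0 [_ HN0]].
  set (N := S N0).
  assert (HN : m / (beta - 1) <= INR N) by (unfold N; rewrite S_INR; lra).
  assert (step : forall n, (N <= n)%nat -> u (S n) <= u n).
  { intros n Hn. unfold u. simpl pochhammer.
    change (Factorial.fact (S n)) with (S n * Factorial.fact n)%nat.
    rewrite mult_INR, S_INR. simpl pow.
    pose proof (poch_pos m n Hm). pose proof (INR_fact_lt_0 n).
    assert (0 < beta ^ n) by (apply pow_lt; lra).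
    apply le_INR in Hn.
    assert (m <= INR n * (beta - 1)).
    { apply (Rmult_le_reg_r (/ (beta - 1))). apply Rinv_0_lt_compat; lra.
      replace (INR n * (beta - 1) * / (beta - 1)) with (INR n) by (field; lra).
      unfold Rdiv in HN. lra. }
    pose proof (pos_INR n).
    replace (pochhammer m n * (m + INR n) / ((INR n + 1) * INR (Factorial.fact n) * (beta * beta ^ n)))
      with ((pochhammer m n / (INR (Factorial.fact n) * beta ^ n)) * ((m + INR n) / ((INR n + 1) * beta)))
      by (field; repeat split; lra).
    rewrite <- (Rmult_1_r (pochhammer m n / (INR (Factorial.fact n) * beta ^ n))) at 2.
    apply Rmult_le_compat_l. left; apply Rdiv_lt_0_compat; auto; nra.
    apply (Rmult_le_reg_r ((INR n + 1) * beta)). nra.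
    field_simplify; nra. }
  assert (tail : forall k, u (N + k)%nat <= u N).
  { induction k. rewrite Nat.add_0_r; lra.
    rewrite Nat.add_succ_r. eapply Rle_trans. apply step. lia. auto. }
  assert (head : forall M n, (n <= M)%nat -> u n <= sum_f_R0 u M).
  { induction M; intros n Hn.
    - assert (n = 0%nat) by lia. subst. simpl. lra.
    - simpl. destruct (Nat.eq_dec n (S M)).
      + subst. pose proof (cond_pos_sum u M (fun k => Rlt_le _ _ (upos k))). lra.
      + pose proof (IHM n ltac:(lia)). pose proof (upos (S M)). lra. }
  exists (sum_f_R0 u N). split.
  { pose proof (head N N (le_n _)). pose proof (upos N). lra. }
  intros n.
  assert (Hun : u n <= sum_f_R0 u N).
  { destruct (Compare_dec.le_lt_dec n N). apply head; auto.
    replace n with (N + (n - N))%nat by lia. eapply Rle_trans. apply tail. apply head; auto. }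
  assert (0 < beta ^ n) by (apply pow_lt; lra).
  pose proof (INR_fact_lt_0 n).
  change (u n) with (pochhammer m n / (INR (Factorial.fact n) * beta ^ n)) in Hun.
  replace (pochhammer m n / INR (Factorial.fact n)) with
    (pochhammer m n / (INR (Factorial.fact n) * beta ^ n) * beta ^ n) by (field; lra).
  apply Rmult_le_compat_r. lra. exact Hun.
Qed.

Lemma hyp_le m beta : 0 < m -> 1 < beta ->
  exists C, 0 < C /\ forall z, 0 <= z -> hyp1F1 m 1 z <= C * exp (beta * z).
Proof.
  intros Hm Hb. destruct (coef_bound m beta Hm Hb) as [C [HC HCb]].
  exists C. split; auto. intros z Hz.
  assert (He : is_series (fun n => C * (/ INR (Factorial.fact n) * (beta * z) ^ n)) (C * exp (beta * z))).
  { apply (is_series_scal_l C (fun n => / INR (Factorial.fact n) * (beta * z) ^ n) (exp (beta * z))). apply is_pseries_R. apply is_exp_Reals. }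
  rewrite hyp_eq. unfold PSeries. rewrite <- (is_series_unique _ _ He).
  apply Series_le. 2: eexists; eauto.
  intros n. split. apply Rmult_le_pos. left; apply hc_pos; auto. apply pow_le; auto.
  unfold hc. rewrite Rpow_mult_distr.
  pose proof (HCb n). pose proof (INR_fact_lt_0 n). pose proof (pow_le z n Hz).
  replace (pochhammer m n / (INR (Factorial.fact n) * INR (Factorial.fact n)) * z ^ n)
    with (pochhammer m n / INR (Factorial.fact n) * (/ INR (Factorial.fact n) * z ^ n)) by (field; lra).
  replace (C * (/ INR (Factorial.fact n) * (beta ^ n * z ^ n))) with
    (C * beta ^ n * (/ INR (Factorial.fact n) * z ^ n)) by ring.
  apply Rmult_le_compat_r; auto.
  apply Rmult_le_pos; auto. left; apply Rinv_0_lt_compat; auto.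
Qed.

Lemma hyp_derive m z : 0 < m -> ex_derive (hyp1F1 m 1) z.
Proof.
  intros Hm. apply ex_derive_ext with (PSeries (hc m)).
  intros; rewrite hyp_eq; auto.
  apply ex_derive_PSeries. rewrite hc_radius; auto. exact I.
Qed.

Lemma exp_le x y : x <= y -> exp x <= exp y.
Proof. intros [H|H]. left; apply exp_increasing; auto. subst; lra. Qed.

Lemma Kbar_nonneg p K1 K2 : 0 <= p <= 1 -> 0 < K1 -> 0 < K2 -> 0 <= Kbar p K1 K2.
Proof. intros; unfold Kbar; nra. Qed.

Section RS.
Variables (p m K1 K2 gbar Kr : R).
Hypotheses (Hp : 0 <= p <= 1) (Hm : 0 < m) (HK1 : 0 < K1) (HK2 : 0 < K2)
  (Hg : 0 < gbar) (HKr : 0 < Kr).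

Let A := (1 + Kbar p K1 K2) / gbar.
Let c := Rpower (m / (m + Kr)) m.
Let kap := Kr / (m + Kr).

Lemma A_pos : 0 < A.
Proof. unfold A. pose proof (Kbar_nonneg p K1 K2 Hp HK1 HK2). apply Rdiv_lt_0_compat; lra. Qed.

Lemma c_pos : 0 < c.
Proof. unfold c, Rpower. apply exp_pos. Qed.

Lemma f_RS_eq g : f_RS p m K1 K2 gbar Kr g = A * c * exp (- (A * g)) * hyp1F1 m 1 (kap * (A * g)).
Proof.
  unfold f_RS, A, c, kap. f_equal. f_equal. f_equal. unfold Rdiv; ring.
  f_equal. field. lra.
Qed.

Lemma f_RS_lower g : 0 <= g -> A * c * exp (- (A * g)) <= f_RS p m K1 K2 gbar Kr g.
Proof.
  intros Hg0. rewrite f_RS_eq. pose proof A_pos. pose proof c_pos.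
  assert (0 <= kap * (A * g)). { unfold kap. apply Rmult_le_pos. apply Rdiv_le_0_compat; lra. nra. }
  pose proof (hyp_ge1 m _ Hm H1).
  pose proof (exp_pos (- (A * g))).
  rewrite <- (Rmult_1_r (A * c * exp (- (A * g)))) at 1.
  apply Rmult_le_compat_l; auto. left. apply Rmult_lt_0_compat; auto. nra.
Qed.

Lemma f_RS_upper beta C g : 0 <= g ->
  (forall z, 0 <= z -> hyp1F1 m 1 z <= C * exp (beta * z)) ->
  f_RS p m K1 K2 gbar Kr g <= A * c * C * exp (- (A * (1 - beta * kap)) * g).
Proof.
  intros Hg0 HC. rewrite f_RS_eq. pose proof A_pos. pose proof c_pos.
  assert (0 <= kap * (A * g)). { unfold kap. apply Rmult_le_pos. apply Rdiv_le_0_compat; lra. nra. }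
  pose proof (HC _ H1).
  pose proof (exp_pos (- (A * g))).
  replace (A * c * C * exp (- (A * (1 - beta * kap)) * g)) with
    (A * c * exp (- (A * g)) * (C * exp (beta * (kap * (A * g))))).
  apply Rmult_le_compat_l; auto. left. apply Rmult_lt_0_compat; auto. nra.
  replace (- (A * (1 - beta * kap)) * g) with (- (A * g) + beta * (kap * (A * g))) by ring.
  rewrite exp_plus. ring.
Qed.

Lemma f_RS_derive g : ex_derive (f_RS p m K1 K2 gbar Kr) g.
Proof.
  unfold f_RS. auto_derive. apply hyp_derive; auto.
Qed.

Lemma f_RS_cont g : continuous (f_RS p m K1 K2 gbar Kr) g.
Proof. apply (ex_derive_continuous (f_RS p m K1 K2 gbar Kr)), f_RS_derive. Qed.


Lemma F_RS_ex a b : ex_RInt (f_RS p m K1 K2 gbar Kr) a b.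
Proof. apply (@ex_RInt_continuous R_CompleteNormedModule). intros; apply f_RS_cont. Qed.

Lemma F_RS_upper beta C x : 0 <= x -> 0 <= C -> beta * kap <= 1 ->
  (forall z, 0 <= z -> hyp1F1 m 1 z <= C * exp (beta * z)) ->
  F_RS p m K1 K2 gbar Kr x <= A * c * C * x.
Proof.
  intros Hx HC Hbk Hh. unfold F_RS.
  apply Rle_trans with (RInt (fun _ => A * c * C) 0 x).
  apply RInt_le; auto. apply F_RS_ex. apply ex_RInt_const.
  intros t Ht. eapply Rle_trans. apply f_RS_upper with (beta := beta); auto. lra.
  pose proof A_pos. pose proof c_pos.
  rewrite <- (Rmult_1_r (A * c * C)) at 2. apply Rmult_le_compat_l.
  apply Rmult_le_pos; auto. nra.
  rewrite <- exp_0. apply exp_le.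
  rewrite exp_0. assert (0 <= A * (1 - beta * kap)) by (apply Rmult_le_pos; lra). assert (0 <= A * (1 - beta * kap) * t) by (apply Rmult_le_pos; lra). lra.
  rewrite RInt_const. unfold scal; simpl; unfold mult; simpl. lra.
Qed.

Lemma F_RS_lower x : 0 <= x ->
  A * c * x * exp (- (A * x)) <= F_RS p m K1 K2 gbar Kr x.
Proof.
  intros Hx. unfold F_RS.
  apply Rle_trans with (RInt (fun _ => A * c * exp (- (A * x))) 0 x).
  rewrite RInt_const. unfold scal; simpl; unfold mult; simpl. lra.
  apply RInt_le; auto. apply ex_RInt_const. apply F_RS_ex.
  intros t Ht. eapply Rle_trans. 2: apply f_RS_lower; lra.
  pose proof A_pos. pose proof c_pos.
  apply Rmult_le_compat_l. nra. apply exp_le. nra.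
Qed.

Lemma F_RS_nonneg x : 0 <= x -> 0 <= F_RS p m K1 K2 gbar Kr x.
Proof.
  intros Hx. eapply Rle_trans. 2: apply F_RS_lower; auto.
  pose proof A_pos. pose proof c_pos. pose proof (exp_pos (- (A * x))).
  apply Rmult_le_pos; try lra. apply Rmult_le_pos; try lra. apply Rmult_le_pos; lra.
Qed.

Lemma F_RS_derive x : is_derive (F_RS p m K1 K2 gbar Kr) x (f_RS p m K1 K2 gbar Kr x).
Proof.
  unfold F_RS. apply is_derive_RInt with 0.
  apply filter_forall. intros; apply (@RInt_correct R_CompleteNormedModule), F_RS_ex.
  apply f_RS_cont.
Qed.

End RS.

Lemma improper (phi : R -> R) M :
  (forall x, continuous phi x) ->
  (forall x, 0 <= x -> 0 <= phi x) ->
  (forall b, 0 <= b -> RInt phi 0 b <= M) ->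
  exists L, is_RInt_gen phi (at_point 0) (Rbar_locally p_infty) L /\ L <= M /\
    forall b, 0 <= b -> RInt phi 0 b <= L.
Proof.
  intros Hc Hpos Hb.
  assert (Hex : forall a b, ex_RInt phi a b).
  { intros. apply (@ex_RInt_continuous R_CompleteNormedModule). intros; apply Hc. }
  assert (Hmono : forall b0 b, 0 <= b0 <= b -> RInt phi 0 b0 <= RInt phi 0 b).
  { intros b0 b Hbb. rewrite <- (RInt_Chasles phi 0 b0 b) by auto.
    assert (0 <= RInt phi b0 b). { apply RInt_ge_0; try lra. auto. intros; apply Hpos; lra. }
    change (plus (RInt phi 0 b0) (RInt phi b0 b)) with (RInt phi 0 b0 + RInt phi b0 b). lra. }
  set (E := fun y => exists b, 0 <= b /\ y = RInt phi 0 b).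
  assert (Hbd : bound E). { exists M. intros y [b [Hb0 ->]]. apply Hb; auto. }
  assert (Hne : exists y, E y). { exists (RInt phi 0 0). exists 0. split; lra. }
  destruct (completeness E Hbd Hne) as [L [HL1 HL2]].
  exists L. split; [|split].
  - intros P [eps Heps]. 
    assert (exists b0, 0 <= b0 /\ L - eps < RInt phi 0 b0).
    { destruct (Rlt_or_le (L - eps) L) as [Hlt|Hle]. 2: { destruct eps; simpl in Hle; lra. }
      apply Classical_Prop.NNPP. intros Hn. 
      assert (is_upper_bound E (L - eps)).
      { intros y [b [Hb0 ->]]. apply Rnot_lt_le. intros Hl. apply Hn. exists b; auto. }
      pose proof (HL2 _ H). lra. }
    destruct H as [b0 [Hb0 Hlt]].
    exists (fun a => a = 0) (fun b => b0 < b).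
    + reflexivity.
    + exists b0. auto.
    + intros a b -> Hbb. simpl. exists (RInt phi 0 b). split.
      apply (@RInt_correct R_CompleteNormedModule). auto.
      apply Heps. unfold ball; simpl; unfold AbsRing_ball, abs, minus, plus, opp; simpl.
      pose proof (Hmono b0 b ltac:(lra)).
      assert (RInt phi 0 b <= L). { apply HL1. exists b; split; auto; lra. }
      apply Rabs_def1; lra.
  - apply HL2. intros y [b [Hb0 ->]]. apply Hb; auto.
  - intros b Hb0. apply HL1. exists b; auto.
Qed.

Section Mix.
Variables (p m K1 K2 : R).
Hypotheses (Hp : 0 <= p <= 1) (Hm : 0 < m) (HK1 : 0 < K1) (HK2 : 0 < K2).

Let kb := 1 + Kbar p K1 K2.

Lemma kb_pos : 0 < kb.
Proof. unfold kb. pose proof (Kbar_nonneg p K1 K2 Hp HK1 HK2); lra. Qed.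

Lemma beta1 Kr : 0 < Kr -> 1 < (m + Kr) / Kr /\ (m + Kr) / Kr * (Kr / (m + Kr)) <= 1.
Proof.
  intros HK. split.
  apply (Rmult_lt_reg_r Kr); auto. field_simplify; lra.
  right; field; lra.
Qed.

Lemma F_ARS_upper : exists U, 0 <= U /\ forall gb x, 0 < gb -> 0 <= x ->
  F_ARS p m K1 K2 gb x <= kb / gb * U * x.
Proof.
  destruct (beta1 K1 HK1) as [Hb1 Hk1]. destruct (beta1 K2 HK2) as [Hb2 Hk2].
  destruct (hyp_le m _ Hm Hb1) as [C1 [HC1 Hh1]].
  destruct (hyp_le m _ Hm Hb2) as [C2 [HC2 Hh2]].
  set (c1 := Rpower (m / (m + K1)) m). set (c2 := Rpower (m / (m + K2)) m).
  assert (0 < c1) by (apply exp_pos). assert (0 < c2) by (apply exp_pos).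
  exists (c1 * C1 + c2 * C2). split. nra.
  intros gb x Hgb Hx. unfold F_ARS.
  pose proof (F_RS_upper p m K1 K2 gb K1 Hp Hm HK1 HK2 Hgb HK1 _ C1 x Hx ltac:(lra) Hk1 Hh1).
  pose proof (F_RS_upper p m K1 K2 gb K2 Hp Hm HK1 HK2 Hgb HK2 _ C2 x Hx ltac:(lra) Hk2 Hh2).
  fold c1 c2 in H1, H2. fold kb in H1, H2.
  assert (0 < kb / gb) by (apply Rdiv_lt_0_compat; auto; apply kb_pos).
  apply Rle_trans with (p * (kb / gb * c1 * C1 * x) + (1 - p) * (kb / gb * c2 * C2 * x)).
  apply Rplus_le_compat; apply Rmult_le_compat_l; lra.
  assert (0 <= kb / gb * c1 * C1 * x). { apply Rmult_le_pos; try lra. apply Rmult_le_pos; try lra. apply Rmult_le_pos; lra. }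
  assert (0 <= kb / gb * c2 * C2 * x). { apply Rmult_le_pos; try lra. apply Rmult_le_pos; try lra. apply Rmult_le_pos; lra. }
  nra.
Qed.

Lemma F_ARS_lower : exists L, 0 < L /\ forall gb x, 0 < gb -> 0 <= x ->
  kb / gb * L * x * exp (- (kb / gb * x)) <= F_ARS p m K1 K2 gb x.
Proof.
  set (c1 := Rpower (m / (m + K1)) m). set (c2 := Rpower (m / (m + K2)) m).
  assert (0 < c1) by (apply exp_pos). assert (0 < c2) by (apply exp_pos).
  exists (Rmin c1 c2). split. apply Rmin_glb_lt; auto.
  intros gb x Hgb Hx. unfold F_ARS.
  pose proof (F_RS_lower p m K1 K2 gb K1 Hp Hm HK1 HK2 Hgb HK1 x Hx).
  pose proof (F_RS_lower p m K1 K2 gb K2 Hp Hm HK1 HK2 Hgb HK2 x Hx).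
  fold c1 c2 kb in H1, H2.
  assert (0 < kb / gb) by (apply Rdiv_lt_0_compat; auto; apply kb_pos).
  pose proof (exp_pos (- (kb / gb * x))).
  set (e := exp (- (kb / gb * x))) in *.
  assert (kb / gb * Rmin c1 c2 * x * e <= kb / gb * c1 * x * e).
  { repeat apply Rmult_le_compat_r; try lra. apply Rmult_le_compat_l; try lra. apply Rmin_l. }
  assert (kb / gb * Rmin c1 c2 * x * e <= kb / gb * c2 * x * e).
  { repeat apply Rmult_le_compat_r; try lra. apply Rmult_le_compat_l; try lra. apply Rmin_r. }
  nra.
Qed.

Lemma F_ARS_cont gb x : 0 < gb -> continuous (F_ARS p m K1 K2 gb) x.
Proof.
  intros Hgb. apply (ex_derive_continuous (F_ARS p m K1 K2 gb)).
  unfold F_ARS. auto_derive. split; [|split; auto]; eexists; apply F_RS_derive; auto.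
Qed.

Lemma f_ARS_cont gb x : 0 < gb -> continuous (f_ARS p m K1 K2 gb) x.
Proof.
  intros Hgb. apply (ex_derive_continuous (f_ARS p m K1 K2 gb)).
  unfold f_ARS. auto_derive. split; [|split; auto]; apply f_RS_derive; auto.
Qed.

Lemma f_ARS_lower gb : 0 < gb -> exists L, 0 < L /\ forall g, 0 <= g ->
  L * exp (- (kb / gb * g)) <= f_ARS p m K1 K2 gb g.
Proof.
  intros Hgb.
  set (c1 := Rpower (m / (m + K1)) m). set (c2 := Rpower (m / (m + K2)) m).
  assert (0 < c1) by (apply exp_pos). assert (0 < c2) by (apply exp_pos).
  assert (0 < kb / gb) by (apply Rdiv_lt_0_compat; auto; apply kb_pos).
  exists (kb / gb * Rmin c1 c2). split. apply Rmult_lt_0_compat; auto. apply Rmin_glb_lt; auto.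
  intros g Hg.
  pose proof (f_RS_lower p m K1 K2 gb K1 Hp Hm HK1 HK2 Hgb HK1 g Hg).
  pose proof (f_RS_lower p m K1 K2 gb K2 Hp Hm HK1 HK2 Hgb HK2 g Hg).
  fold c1 c2 kb in H2, H3. unfold f_ARS.
  pose proof (exp_pos (- (kb / gb * g))).
  set (e := exp (- (kb / gb * g))) in *.
  assert (kb / gb * Rmin c1 c2 * e <= kb / gb * c1 * e).
  { repeat apply Rmult_le_compat_r; try lra. apply Rmult_le_compat_l; try lra. apply Rmin_l. }
  assert (kb / gb * Rmin c1 c2 * e <= kb / gb * c2 * e).
  { repeat apply Rmult_le_compat_r; try lra. apply Rmult_le_compat_l; try lra. apply Rmin_r. }
  nra.
Qed.

Lemma beta2 Kr : 0 < Kr -> 1 < (m + 2 * Kr) / (2 * Kr) /\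
  (m + 2 * Kr) / (2 * Kr) * (Kr / (m + Kr)) = 1 - m / (2 * (m + Kr)).
Proof.
  intros HK. split.
  apply (Rmult_lt_reg_r (2 * Kr)). lra. field_simplify; lra.
  field; lra.
Qed.

Lemma f_ARS_upper gb : 0 < gb -> exists U d, 0 <= U /\ 0 < d /\ forall g, 0 <= g ->
  f_ARS p m K1 K2 gb g <= U * exp (- d * g).
Proof.
  intros Hgb.
  destruct (beta2 K1 HK1) as [Hb1 Hk1]. destruct (beta2 K2 HK2) as [Hb2 Hk2].
  destruct (hyp_le m _ Hm Hb1) as [C1 [HC1 Hh1]].
  destruct (hyp_le m _ Hm Hb2) as [C2 [HC2 Hh2]].
  set (c1 := Rpower (m / (m + K1)) m). set (c2 := Rpower (m / (m + K2)) m).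
  assert (0 < c1) by (apply exp_pos). assert (0 < c2) by (apply exp_pos).
  assert (0 < kb / gb) by (apply Rdiv_lt_0_compat; auto; apply kb_pos).
  set (d1 := kb / gb * (1 - (m + 2 * K1) / (2 * K1) * (K1 / (m + K1)))).
  set (d2 := kb / gb * (1 - (m + 2 * K2) / (2 * K2) * (K2 / (m + K2)))).
  assert (0 < d1). { unfold d1. rewrite Hk1. apply Rmult_lt_0_compat; auto.
    assert (0 < m / (2 * (m + K1))) by (apply Rdiv_lt_0_compat; lra). lra. }
  assert (0 < d2). { unfold d2. rewrite Hk2. apply Rmult_lt_0_compat; auto.
    assert (0 < m / (2 * (m + K2))) by (apply Rdiv_lt_0_compat; lra). lra. }
  exists (kb / gb * c1 * C1 + kb / gb * c2 * C2), (Rmin d1 d2).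
  split. assert (0 < kb / gb * c1 * C1) by (apply Rmult_lt_0_compat; auto; apply Rmult_lt_0_compat; auto).
  assert (0 < kb / gb * c2 * C2) by (apply Rmult_lt_0_compat; auto; apply Rmult_lt_0_compat; auto). lra.
  split. apply Rmin_glb_lt; auto.
  intros g Hg. unfold f_ARS.
  pose proof (f_RS_upper p m K1 K2 gb K1 Hp Hm HK1 HK2 Hgb HK1 _ C1 g Hg Hh1).
  pose proof (f_RS_upper p m K1 K2 gb K2 Hp Hm HK1 HK2 Hgb HK2 _ C2 g Hg Hh2).
  fold c1 c2 kb d1 d2 in H4, H5.
  assert (exp (- d1 * g) <= exp (- Rmin d1 d2 * g)).
  { apply exp_le. pose proof (Rmin_l d1 d2). nra. }
  assert (exp (- d2 * g) <= exp (- Rmin d1 d2 * g)).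
  { apply exp_le. pose proof (Rmin_r d1 d2). nra. }
  assert (0 < kb / gb * c1 * C1) by (apply Rmult_lt_0_compat; auto; apply Rmult_lt_0_compat; auto).
  assert (0 < kb / gb * c2 * C2) by (apply Rmult_lt_0_compat; auto; apply Rmult_lt_0_compat; auto).
  pose proof (exp_pos (- Rmin d1 d2 * g)).
  assert (kb / gb * c1 * C1 * exp (- d1 * g) <= kb / gb * c1 * C1 * exp (- Rmin d1 d2 * g))
    by (apply Rmult_le_compat_l; lra).
  assert (kb / gb * c2 * C2 * exp (- d2 * g) <= kb / gb * c2 * C2 * exp (- Rmin d1 d2 * g))
    by (apply Rmult_le_compat_l; lra).
  set (e := exp (- Rmin d1 d2 * g)) in *.
  set (F1 := f_RS p m K1 K2 gb K1 g) in *. set (F2 := f_RS p m K1 K2 gb K2 g) in *.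
  set (a1 := kb / gb * c1 * C1) in *. set (a2 := kb / gb * c2 * C2) in *.
  assert (F1 <= a1 * e) by lra. assert (F2 <= a2 * e) by lra.
  assert (p * F1 <= p * (a1 * e)) by (apply Rmult_le_compat_l; lra).
  assert ((1-p) * F2 <= (1-p) * (a2 * e)) by (apply Rmult_le_compat_l; lra).
  assert (0 <= a1 * e) by nra. assert (0 <= a2 * e) by nra. nra.
Qed.

End Mix.

Lemma int_bound K d b : 0 <= K -> 0 < d -> 0 <= b ->
  RInt (fun g => K * ((g + 1) * exp (- d * g))) 0 b <= K * (1 / d + 1 / (d * d)).
Proof.
  intros HK Hd Hb.
  set (G := fun g => - K * ((g + 1) / d + 1 / (d * d)) * exp (- d * g)).
  assert (His : is_RInt (fun g => K * ((g + 1) * exp (- d * g))) 0 b (minus (G b) (G 0))).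
  { apply (@is_RInt_derive R_CompleteNormedModule).
    - intros x _. unfold G. auto_derive. auto. field. lra.
    - intros x _. apply (ex_derive_continuous (fun g => K * ((g + 1) * exp (- d * g)))).
      auto_derive. auto. }
  rewrite (is_RInt_unique _ _ _ _ His).
  unfold minus, plus, opp; simpl. unfold G.
  rewrite Rmult_0_r, exp_0.
  pose proof (exp_pos (- d * b)).
  assert (0 <= K * ((b + 1) / d + 1 / (d * d)) * exp (- d * b)).
  { apply Rmult_le_pos; [|lra]. apply Rmult_le_pos; auto.
    assert (0 < (b + 1) / d) by (apply Rdiv_lt_0_compat; lra).
    assert (0 < 1 / (d * d)) by (apply Rdiv_lt_0_compat; nra). lra. }
  replace (K * (1 / d + 1 / (d * d))) with (K * ((0 + 1) / d + 1 / (d * d)) * 1) by (field; lra).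
  lra.
Qed.

Lemma Rs_gt1 Rt : 0 < Rt -> 1 < Rs Rt.
Proof.
  intros H. unfold Rs, Rpower. rewrite <- exp_0. apply exp_increasing.
  assert (0 < ln 2). { rewrite <- ln_1. apply ln_increasing; lra. }
  nra.
Qed.

Lemma Pout_bounds (Rt pB mB KB1 KB2 pE mE KE1 KE2 gE : R) :
  0 < Rt ->
  0 <= pB <= 1 -> 0 < mB -> 0 < KB1 -> 0 < KB2 ->
  0 <= pE <= 1 -> 0 < mE -> 0 < KE1 -> 0 < KE2 -> 0 < gE ->
  exists D M, 0 < D /\ 0 < M /\ forall gB, 1 <= gB ->
    D / gB <= Pout Rt pB mB KB1 KB2 gB pE mE KE1 KE2 gE <= M / gB.
Proof.
  intros HRt HpB HmB HKB1 HKB2 HpE HmE HKE1 HKE2 HgE.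
  pose proof (Rs_gt1 Rt HRt) as HR. set (R := Rs Rt) in *.
  destruct (F_ARS_upper pB mB KB1 KB2 HpB HmB HKB1 HKB2) as [UB [HUB HUBb]].
  destruct (F_ARS_lower pB mB KB1 KB2 HpB HmB HKB1 HKB2) as [LB [HLB HLBb]].
  destruct (f_ARS_upper pE mE KE1 KE2 HpE HmE HKE1 HKE2 gE HgE) as [UE [d [HUE [Hd HUEb]]]].
  destruct (f_ARS_lower pE mE KE1 KE2 HpE HmE HKE1 HKE2 gE HgE) as [LE [HLE HLEb]].
  pose proof (kb_pos pB KB1 KB2 HpB HKB1 HKB2) as HkB.
  pose proof (kb_pos pE KE1 KE2 HpE HKE1 HKE2) as HkE.
  set (kB := 1 + Kbar pB KB1 KB2) in *.
  set (kE := 1 + Kbar pE KE1 KE2) in *.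
  set (M0 := UB * R * UE * (1 / d + 1 / (d * d))).
  set (D0 := LB * (R - 1) * exp (- (kB * (2 * R - 1))) * (LE * exp (- (kE / gE)))).
  assert (HM0 : 0 <= M0).
  { unfold M0. apply Rmult_le_pos. apply Rmult_le_pos. apply Rmult_le_pos; lra. lra.
    assert (0 < 1 / d) by (apply Rdiv_lt_0_compat; lra).
    assert (0 < 1 / (d * d)) by (apply Rdiv_lt_0_compat; nra). lra. }
  assert (HD0 : 0 < D0).
  { unfold D0. pose proof (exp_pos (- (kB * (2 * R - 1)))). pose proof (exp_pos (- (kE / gE))).
    apply Rmult_lt_0_compat. apply Rmult_lt_0_compat. apply Rmult_lt_0_compat; lra. lra.
    apply Rmult_lt_0_compat; lra. }
  exists (kB * D0), (kB * M0 + 1). split. apply Rmult_lt_0_compat; lra. split. nra.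
  intros gB HgB.
  assert (HgB0 : 0 < gB) by lra.
  assert (HA : 0 < kB / gB) by (apply Rdiv_lt_0_compat; lra).
  set (phi := fun g => F_ARS pB mB KB1 KB2 gB (R * g + R - 1) * f_ARS pE mE KE1 KE2 gE g).
  assert (Fnn : forall x, 0 <= x -> 0 <= F_ARS pB mB KB1 KB2 gB x).
  { intros x Hx. eapply Rle_trans. 2: apply HLBb; auto.
    pose proof (exp_pos (- (kB / gB * x))).
    apply Rmult_le_pos; [|lra]. apply Rmult_le_pos; [|lra]. apply Rmult_le_pos; lra. }
  assert (fnn : forall g, 0 <= g -> 0 <= f_ARS pE mE KE1 KE2 gE g).
  { intros g Hg. eapply Rle_trans. 2: apply HLEb; auto.
    pose proof (exp_pos (- (kE / gE * g))). nra. }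
  assert (Hcont : forall x, continuous phi x).
  { intros x. unfold phi. apply (@continuous_mult R_UniformSpace R_AbsRing (fun g => F_ARS pB mB KB1 KB2 gB (R * g + R - 1))).
    apply (continuous_comp (fun g => R * g + R - 1) (F_ARS pB mB KB1 KB2 gB)).
    apply (ex_derive_continuous (fun g => R * g + R - 1)). auto_derive. auto.
    apply F_ARS_cont; auto; lra.
    apply f_ARS_cont; auto; lra. }
  assert (Hpos : forall x, 0 <= x -> 0 <= phi x).
  { intros x Hx. unfold phi. apply Rmult_le_pos. apply Fnn. nra. apply fnn; auto. }
  assert (Hup : forall g, 0 <= g -> phi g <= (kB / gB * UB * R * UE) * ((g + 1) * exp (- d * g))).
  { intros g Hg. unfold phi.
    assert (HX : 0 <= R * g + R - 1) by nra.
    pose proof (HUBb gB _ HgB0 HX). pose proof (HUEb g Hg).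
    pose proof (Fnn _ HX). pose proof (fnn g Hg).
    pose proof (exp_pos (- d * g)).
    assert (kB / gB * UB * (R * g + R - 1) <= kB / gB * UB * R * (g + 1)).
    { replace (kB / gB * UB * R * (g + 1)) with (kB / gB * UB * (R * g + R)) by ring.
      apply Rmult_le_compat_l. apply Rmult_le_pos; lra. lra. }
    apply Rle_trans with ((kB / gB * UB * (R * g + R - 1)) * (UE * exp (- d * g))).
    apply Rmult_le_compat; auto.
    replace (kB / gB * UB * R * UE * ((g + 1) * exp (- d * g))) with
      ((kB / gB * UB * R * (g + 1)) * (UE * exp (- d * g))) by ring.
    apply Rmult_le_compat_r. apply Rmult_le_pos; lra. auto. }
  assert (Hbnd : forall b, 0 <= b -> RInt phi 0 b <= kB / gB * M0).
  { intros b Hb.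
    apply Rle_trans with (RInt (fun g => (kB / gB * UB * R * UE) * ((g + 1) * exp (- d * g))) 0 b).
    apply RInt_le; auto.
    apply (@ex_RInt_continuous R_CompleteNormedModule). intros; apply Hcont.
    apply (@ex_RInt_continuous R_CompleteNormedModule). intros.
    apply (ex_derive_continuous (fun g => (kB / gB * UB * R * UE) * ((g + 1) * exp (- d * g)))).
    auto_derive; auto.
    intros x Hx; apply Hup; lra.
    eapply Rle_trans. apply int_bound; auto.
    apply Rmult_le_pos; [|lra]. apply Rmult_le_pos; [|lra]. apply Rmult_le_pos; lra.
    right. unfold M0. ring. }
  destruct (improper phi _ Hcont Hpos Hbnd) as [L [HL1 [HL2 HL3]]].
  assert (HP : Pout Rt pB mB KB1 KB2 gB pE mE KE1 KE2 gE = L).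
  { unfold Pout. apply is_RInt_gen_unique. exact HL1. }
  rewrite HP. split.
  - apply Rle_trans with (RInt phi 0 1); [|apply HL3; lra].
    apply Rle_trans with (RInt (fun _ => kB / gB * D0) 0 1).
    rewrite RInt_const. unfold scal; simpl; unfold mult; simpl. right. unfold Rdiv. ring.
    apply RInt_le. lra. apply ex_RInt_const.
    apply (@ex_RInt_continuous R_CompleteNormedModule). intros; apply Hcont.
    intros x Hx. unfold phi.
    assert (HX : 0 <= R * x + R - 1) by nra.
    pose proof (HLBb gB _ HgB0 HX). pose proof (HLEb x ltac:(lra)).
    assert (HAk : kB / gB <= kB).
    { apply (Rmult_le_reg_r gB); auto. unfold Rdiv. rewrite Rmult_assoc, Rinv_l by lra. nra. }
    assert (E1 : exp (- (kB * (2 * R - 1))) <= exp (- (kB / gB * (R * x + R - 1)))).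
    { apply exp_le. apply Ropp_le_contravar.
      apply Rle_trans with (kB * (R * x + R - 1)). apply Rmult_le_compat_r; lra.
      apply Rmult_le_compat_l; nra. }
    assert (E2 : exp (- (kE / gE)) <= exp (- (kE / gE * x))).
    { apply exp_le. apply Ropp_le_contravar. assert (0 < kE / gE) by (apply Rdiv_lt_0_compat; lra).
      nra. }
    pose proof (exp_pos (- (kB * (2 * R - 1)))). pose proof (exp_pos (- (kE / gE))).
    assert (B1 : kB / gB * (LB * ((R - 1) * exp (- (kB * (2 * R - 1))))) <=
             F_ARS pB mB KB1 KB2 gB (R * x + R - 1)).
    { eapply Rle_trans. 2: apply H.
      replace (kB / gB * LB * (R * x + R - 1) * exp (- (kB / gB * (R * x + R - 1)))) with
        (kB / gB * (LB * ((R * x + R - 1) * exp (- (kB / gB * (R * x + R - 1)))))) by ring.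
      apply Rmult_le_compat_l; [lra|]. apply Rmult_le_compat_l; [lra|].
      apply Rmult_le_compat; nra. }
    assert (B2 : LE * exp (- (kE / gE)) <= f_ARS pE mE KE1 KE2 gE x).
    { eapply Rle_trans. 2: apply H0. apply Rmult_le_compat_l; lra. }
    unfold D0.
    replace (kB / gB * (LB * (R - 1) * exp (- (kB * (2 * R - 1))) * (LE * exp (- (kE / gE))))) with
      ((kB / gB * (LB * ((R - 1) * exp (- (kB * (2 * R - 1)))))) * (LE * exp (- (kE / gE)))) by ring.
    apply Rmult_le_compat; auto.
    apply Rmult_le_pos; [lra|]. apply Rmult_le_pos; [lra|]. apply Rmult_le_pos; lra.
    apply Rmult_le_pos; lra.
  - apply Rle_trans with (kB / gB * M0); auto.
    unfold Rdiv. assert (0 < / gB) by (apply Rinv_0_lt_compat; lra). nra.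
Qed.

Lemma lim_aux c : is_lim (fun y => (c - ln y) / ln y) p_infty (-1).
Proof.
  apply is_lim_ext_loc with (fun y => c * / ln y + -1).
  { exists 1. intros y Hy. assert (0 < ln y) by (rewrite <- ln_1; apply ln_increasing; lra).
    field. lra. }
  eapply is_lim_plus. 
  apply is_lim_scal_l. apply is_lim_inv. apply is_lim_ln_p. discriminate.
  apply is_lim_const.
  simpl. apply (f_equal (fun z => Some (Finite z))). ring.
Qed.

Theorem mainTheorem10 (Rt pB mB KB1 KB2 pE mE KE1 KE2 gE : R) :
  0 < Rt ->
  0 <= pB <= 1 -> 0 < mB -> 0 < KB1 -> 0 < KB2 ->
  0 <= pE <= 1 -> 0 < mE -> 0 < KE1 -> 0 < KE2 -> 0 < gE ->
  is_lim (fun gB => ln (Pout Rt pB mB KB1 KB2 gB pE mE KE1 KE2 gE) / ln gB)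
    p_infty (-1).
Proof.
  intros. destruct (Pout_bounds Rt pB mB KB1 KB2 pE mE KE1 KE2 gE) as [D [M [HD [HM Hb]]]]; auto.
  apply is_lim_le_le_loc with (fun y => (ln D - ln y) / ln y) (fun y => (ln M - ln y) / ln y).
  2: apply lim_aux. 2: apply lim_aux.
  exists 1. intros y Hy. destruct (Hb y ltac:(lra)) as [HL HU].
  assert (0 < ln y) by (rewrite <- ln_1; apply ln_increasing; lra).
  assert (0 < D / y) by (apply Rdiv_lt_0_compat; lra).
  rewrite <- !ln_div by lra.
  split; unfold Rdiv at 1 3; apply Rmult_le_compat_r; try (left; apply Rinv_0_lt_compat; lra).
  destruct HL as [HL|HL]. left; apply ln_increasing; lra. rewrite HL; lra.
  destruct HU as [HU|HU]. left; apply ln_increasing; lra. rewrite HU; lra.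
Qed.
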